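(* Let $E=\{z_1,\dots,z_n\}\subset\mathbb{R}^2$, $n\ge3$, with $z_i\,\mathcal{I}\,z_j$ for all $i\neq j$. For each of the variants Max-Min, Max-Sum, Max-Sum-Min, Max-Min-Sum and Max-Sum-Neighbor, the $3$-dispersion problem in $E$ is solvable in $O(n)$ time using $O(1)$ additional memory space.
   Context: For $y=(y^1,y^2),z=(z^1,z^2)\in\mathbb{R}^2$ write $y\prec z$ iff $y^1<z^1$ and $y^2>z^2$, and $y\,\mathcal{I}\,z$ iff $y\prec z$ or $z\prec y$. Fix $\alpha>0$ and let $d$ be the Euclidean distance. For $2\le p\le n$, let $D_p$ be the set of $p$-tuples $(w_1,\dots,w_p)\in E^p$ of pairwise distinct points, $\delta_{ij}=d(w_i,w_j)^\alpha$. The $p$-dispersion problems maximize over $D_p$: Max-Min: $\min_{1\le i<j\le p}\delta_{ij}$; Max-Sum: $\sum_{1\le i<j\le p}\delta_{ij}$; Max-Sum-Min: $\sum_{i=1}^p\min_{j\ne i}\delta_{ij}$; Max-Min-Sum: $\min_{1\le i\le p}\sum_{j\ne i}\delta_{ij}$. For Max-Sum-Neighbor, index $E$ as $x_1,\dots,x_n$ with increasing first coordinates and maximize $\sum_{j=1}^{p-1}d(x_{i_j},x_{i_{j+1}})^\alpha$ over $1\le i_1<\dots<i_p\le n$. Complexities are in a model where arithmetic operations, comparisons and evaluation of $d(\cdot,\cdot)^\alpha$ take $O(1)$ time; ''additional memory space'' excludes the input. *)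

(* Defs.v *)
From Stdlib Require Import Reals List.
Import ListNotations.
Open Scope R_scope.

Definition pt : Type := (R * R)%type.

Definition prec (y z : pt) : Prop := fst y < fst z /\ snd y > snd z.

Definition incomp (y z : pt) : Prop := prec y z \/ prec z y.

Definition dist2 (y z : pt) : R :=
  sqrt ((fst y - fst z) ^ 2 + (snd y - snd z) ^ 2).

(** delta = d(y,z)^alpha (only ever used on distinct points, where d > 0) *)
Definition delta (alpha : R) (y z : pt) : R := Rpower (dist2 y z) alpha.

Inductive variant : Type :=
  | MaxMin | MaxSum | MaxSumMin | MaxMinSum | MaxSumNeighbor.

Definition D3 (E : list pt) (w1 w2 w3 : pt) : Prop :=
  In w1 E /\ In w2 E /\ In w3 E /\ w1 <> w2 /\ w1 <> w3 /\ w2 <> w3.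

Definition obj_MaxMin (a : R) (w1 w2 w3 : pt) : R :=
  Rmin (Rmin (delta a w1 w2) (delta a w1 w3)) (delta a w2 w3).

Definition obj_MaxSum (a : R) (w1 w2 w3 : pt) : R :=
  delta a w1 w2 + delta a w1 w3 + delta a w2 w3.

Definition obj_MaxSumMin (a : R) (w1 w2 w3 : pt) : R :=
  Rmin (delta a w1 w2) (delta a w1 w3)
  + Rmin (delta a w2 w1) (delta a w2 w3)
  + Rmin (delta a w3 w1) (delta a w3 w2).

Definition obj_MaxMinSum (a : R) (w1 w2 w3 : pt) : R :=
  Rmin (Rmin (delta a w1 w2 + delta a w1 w3)
             (delta a w2 w1 + delta a w2 w3))
       (delta a w3 w1 + delta a w3 w2).

(** Max-Sum-Neighbor: E indexed x_1..x_n by increasing first coordinate;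
    an index triple i1 < i2 < i3 is exactly a triple of points of E with
    strictly increasing first coordinates (first coordinates are pairwise
    distinct under the incomparability hypothesis). *)
Definition Dnb (E : list pt) (w1 w2 w3 : pt) : Prop :=
  In w1 E /\ In w2 E /\ In w3 E /\ fst w1 < fst w2 /\ fst w2 < fst w3.

Definition obj_Neighbor (a : R) (w1 w2 w3 : pt) : R :=
  delta a w1 w2 + delta a w2 w3.

Definition obj (v : variant) : R -> pt -> pt -> pt -> R :=
  match v with
  | MaxMin => obj_MaxMin
  | MaxSum => obj_MaxSum
  | MaxSumMin => obj_MaxSumMin
  | MaxMinSum => obj_MaxMinSum
  | MaxSumNeighbor => obj_Neighbor
  end.

Definition feasible (v : variant) : list pt -> pt -> pt -> pt -> Prop :=
  match v with
  | MaxSumNeighbor => Dnb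
  | _ => D3
  end.

Definition optimal (v : variant) (alpha : R) (E : list pt) (w : pt * pt * pt) : Prop :=
  let '(w1, w2, w3) := w in
  feasible v E w1 w2 w3 /\
  forall u1 u2 u3, feasible v E u1 u2 u3 ->
    obj v alpha u1 u2 u3 <= obj v alpha w1 w2 w3.

(** A program has finitely many real registers (those it mentions), an
   initialisation command, a FIXED finite list of passes (each pass runs one
   fixed command on every input point, in input order), and a final command.
   Commands are built from O(1)-time primitives: arithmetic, comparisons,
   and evaluation of d(.,.)^alpha.  Since the program text does not depend
   on n, every such program runs in O(n) time with O(1) additional memory. *)

Inductive expr : Type :=
  | EConst (c : R)
  | EReg (i : nat)
  | EIn1
  | EIn2
  | EAdd (e1 e2 : expr)
  | ESub (e1 e2 : expr)
  | EMul (e1 e2 : expr)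
  | EDelta (x1 y1 x2 y2 : expr).

Inductive cmd : Type :=
  | CSkip
  | CSet (i : nat) (e : expr)
  | CSeq (c1 c2 : cmd)
  | CIfLe (e1 e2 : expr) (c1 c2 : cmd).

Definition regs : Type := nat -> R.

Fixpoint eval_expr (alpha : R) (cur : pt) (rho : regs) (e : expr) : R :=
  match e with
  | EConst c => c
  | EReg i => rho i
  | EIn1 => fst cur
  | EIn2 => snd cur
  | EAdd e1 e2 => eval_expr alpha cur rho e1 + eval_expr alpha cur rho e2
  | ESub e1 e2 => eval_expr alpha cur rho e1 - eval_expr alpha cur rho e2
  | EMul e1 e2 => eval_expr alpha cur rho e1 * eval_expr alpha cur rho e2
  | EDelta x1 y1 x2 y2 =>
      delta alpha (eval_expr alpha cur rho x1, eval_expr alpha cur rho y1)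
                  (eval_expr alpha cur rho x2, eval_expr alpha cur rho y2)
  end.

Definition upd (rho : regs) (i : nat) (x : R) : regs :=
  fun j => if Nat.eqb j i then x else rho j.

Fixpoint exec (alpha : R) (cur : pt) (rho : regs) (c : cmd) : regs :=
  match c with
  | CSkip => rho
  | CSet i e => upd rho i (eval_expr alpha cur rho e)
  | CSeq c1 c2 => exec alpha cur (exec alpha cur rho c1) c2
  | CIfLe e1 e2 c1 c2 =>
      if Rle_dec (eval_expr alpha cur rho e1) (eval_expr alpha cur rho e2)
      then exec alpha cur rho c1 else exec alpha cur rho c2
  end.

Record program : Type := Program {
  p_init : cmd;
  p_passes : list cmd;
  p_final : cmd
}.

Definition run_pass (alpha : R) (E : list pt) (rho : regs) (c : cmd) : regs :=
  fold_left (fun r z => exec alpha z r c) E rho.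

Definition run (alpha : R) (P : program) (E : list pt) : pt * pt * pt :=
  let r0 := exec alpha (0, 0) (fun _ => 0) (p_init P) in
  let r1 := fold_left (run_pass alpha E) (p_passes P) r0 in
  let r2 := exec alpha (0, 0) r1 (p_final P) in
  ((r2 0%nat, r2 1%nat), (r2 2%nat, r2 3%nat), (r2 4%nat, r2 5%nat)).

(* Main.v *)
Require Import Defs.
From Stdlib Require Import Reals List Lra Lia Classical.
Import ListNotations.
Open Scope R_scope.

Definition ch (p q : pt) : Prop := fst p <= fst q /\ snd q <= snd p.

Lemma dist_mono a b c d : ch a b -> ch b c -> ch c d -> dist2 b c <= dist2 a d.
Proof.
  unfold ch, dist2; intros [H1 H2] [H3 H4] [H5 H6].
  apply sqrt_le_1_alt. simpl.
  assert ((fst b - fst c) * (fst b - fst c) <= (fst a - fst d) * (fst a - fst d)) by nra.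
  assert ((snd b - snd c) * (snd b - snd c) <= (snd a - snd d) * (snd a - snd d)) by nra.
  rewrite !Rmult_1_r; lra.
Qed.

Lemma dist_pos p q : fst p < fst q -> 0 < dist2 p q.
Proof. intros H; unfold dist2; apply sqrt_lt_R0.
  assert (0 < (fst p - fst q) * (fst p - fst q)) by nra.
  pose proof (Rle_0_sqr (snd p - snd q)); unfold Rsqr in *.
  simpl; rewrite !Rmult_1_r; lra. Qed.

Lemma delta_sym a p q : delta a p q = delta a q p.
Proof. unfold delta, dist2. f_equal. f_equal. ring. Qed.

Lemma delta_pos a p q : 0 < delta a p q.
Proof. unfold delta, Rpower. apply exp_pos. Qed.

Lemma delta_mono al a b c d : 0 < al -> fst b < fst c ->
  ch a b -> ch b c -> ch c d -> delta al b c <= delta al a d.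
Proof.
  intros Ha Hbc H1 H2 H3. unfold delta. apply Rle_Rpower_l; [lra|].
  split; [apply dist_pos; auto| apply dist_mono; auto].
Qed.

Lemma ch_refl p : ch p p.
Proof. unfold ch; lra. Qed.

Section S.
Variable E : list pt.
Hypothesis Hinc : forall y z, In y E -> In z E -> y <> z -> incomp y z.

Lemma ch_of p q : In p E -> In q E -> fst p <= fst q -> ch p q.
Proof.
  intros Hp Hq Hle. destruct (classic (p = q)) as [<-|Hne]; [apply ch_refl|].
  destruct (Hinc p q Hp Hq Hne) as [[A B]|[A B]]; unfold ch; lra.
Qed.

Lemma fst_neq p q : In p E -> In q E -> p <> q -> fst p <> fst q.
Proof.
  intros Hp Hq Hne. destruct (Hinc p q Hp Hq Hne) as [[A B]|[A B]]; lra.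
Qed.
End S.

Ltac rmin_solve := unfold Rmin; repeat destruct Rle_dec; lra.

Lemma obj_swap12 v a u1 u2 u3 : v <> MaxSumNeighbor ->
  obj v a u1 u2 u3 = obj v a u2 u1 u3.
Proof.
  intros Hv; destruct v; try congruence; simpl;
  unfold obj_MaxMin, obj_MaxSum, obj_MaxSumMin, obj_MaxMinSum;
  rewrite ?(delta_sym a u2 u1), ?(delta_sym a u3 u1), ?(delta_sym a u3 u2);
  rmin_solve.
Qed.

Lemma obj_swap23 v a u1 u2 u3 : v <> MaxSumNeighbor ->
  obj v a u1 u2 u3 = obj v a u1 u3 u2.
Proof.
  intros Hv; destruct v; try congruence; simpl;
  unfold obj_MaxMin, obj_MaxSum, obj_MaxSumMin, obj_MaxMinSum;
  rewrite ?(delta_sym a u2 u1), ?(delta_sym a u3 u1), ?(delta_sym a u3 u2);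
  rmin_solve.
Qed.

Lemma obj_mono v a u1 u2 u3 w1 w2 w3 :
  delta a u1 u2 <= delta a w1 w2 ->
  delta a u1 u3 <= delta a w1 w3 ->
  delta a u2 u3 <= delta a w2 w3 ->
  obj v a u1 u2 u3 <= obj v a w1 w2 w3.
Proof.
  intros H1 H2 H3. destruct v; simpl;
  unfold obj_MaxMin, obj_MaxSum, obj_MaxSumMin, obj_MaxMinSum, obj_Neighbor;
  rewrite ?(delta_sym a u2 u1), ?(delta_sym a u3 u1), ?(delta_sym a u3 u2);
  rewrite ?(delta_sym a w2 w1), ?(delta_sym a w3 w1), ?(delta_sym a w3 w2);
  rmin_solve.
Qed.

Lemma obj_nonneg v a u1 u2 u3 : 0 <= obj v a u1 u2 u3.
Proof.
  pose proof (delta_pos a u1 u2); pose proof (delta_pos a u1 u3);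
  pose proof (delta_pos a u2 u3); pose proof (delta_pos a u2 u1);
  pose proof (delta_pos a u3 u1); pose proof (delta_pos a u3 u2).
  destruct v; simpl;
  unfold obj_MaxMin, obj_MaxSum, obj_MaxSumMin, obj_MaxMinSum, obj_Neighbor;
  rmin_solve.
Qed.

Lemma sort3 (Q : pt -> pt -> pt -> Prop) :
  (forall a b c, Q a b c -> Q b a c) -> (forall a b c, Q a b c -> Q a c b) ->
  (forall a b c, fst a < fst b < fst c -> Q a b c) ->
  forall a b c, fst a <> fst b -> fst a <> fst c -> fst b <> fst c -> Q a b c.
Proof.
  intros S1 S2 H a b c Hab Hac Hbc.
  destruct (Rlt_or_le (fst a) (fst b)); destruct (Rlt_or_le (fst a) (fst c));
  destruct (Rlt_or_le (fst b) (fst c)).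
  all: first [ apply H; lra
             | apply S1; apply H; lra
             | apply S2; apply H; lra
             | apply S1; apply S2; apply H; lra
             | apply S2; apply S1; apply H; lra
             | apply S1; apply S2; apply S1; apply H; lra
             | exfalso; lra ].
Qed.

Definition mid (L Rt z : pt) := fst L < fst z < fst Rt.

Lemma final_opt v a E L M Rt : 0 < a ->
  (forall y z, In y E -> In z E -> y <> z -> incomp y z) ->
  In L E -> In Rt E -> In M E ->
  (forall z, In z E -> fst L <= fst z <= fst Rt) ->
  mid L Rt M ->
  (forall z, In z E -> mid L Rt z -> obj v a L z Rt <= obj v a L M Rt) ->
  optimal v a E (L, M, Rt).
Proof.
  intros Ha Hinc HL HR HM Hb Hmid Hbest.
  assert (Hs : forall p q r, In p E -> In q E -> In r E ->
            fst p < fst q < fst r -> obj v a p q r <= obj v a L M Rt).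
  { intros p q r Hp Hq Hr Hpq.
    assert (Hq' : mid L Rt q) by (unfold mid; pose proof (Hb p Hp); pose proof (Hb r Hr); lra).
    eapply Rle_trans; [|apply (Hbest q Hq Hq')].
    pose proof (Hb p Hp); pose proof (Hb r Hr); pose proof (Hb q Hq).
    apply obj_mono.
    - apply delta_mono; try lra; try apply ch_refl; apply (ch_of E Hinc); auto; lra.
    - apply delta_mono; try lra; apply (ch_of E Hinc); auto; lra.
    - apply delta_mono; try lra; try apply ch_refl; apply (ch_of E Hinc); auto; lra. }
  unfold mid in Hmid.
  split.
  - destruct v; simpl; unfold D3, Dnb; repeat split; auto; try lra;
    intro Heq; subst; lra.
  - intros u1 u2 u3 Hf. destruct v; simpl in Hf;
    try (destruct Hf as (H1 & H2 & H3 & H4 & H5); apply Hs; auto; lra).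
    all: destruct Hf as (H1 & H2 & H3 & H4 & H5 & H6).
    all: pose proof (fst_neq E Hinc _ _ H1 H2 H4);
      pose proof (fst_neq E Hinc _ _ H1 H3 H5);
      pose proof (fst_neq E Hinc _ _ H2 H3 H6).
    all: revert H1 H2 H3; pattern u1, u2, u3;
      (apply sort3; [intros x y z Hq ? ? ?; rewrite obj_swap12 by discriminate; auto
                   |intros x y z Hq ? ? ?; rewrite obj_swap23 by discriminate; auto
                   |intros x y z Hxyz ? ? ?; apply Hs; auto
                   | | | ]); assumption.
Qed.

Lemma fold_inv_aux {A B} (f : B -> A -> B) (E : list A) (I : list A -> B -> Prop) :
  (forall l z r, In z E -> I l r -> I (l ++ [z]) (f r z)) ->
  forall E2 l r, incl E2 E -> I l r -> I (l ++ E2) (fold_left f E2 r).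
Proof.
  intros Hs E2; induction E2 as [|x E2 IH]; intros l r Hi HI; simpl.
  - rewrite app_nil_r; auto.
  - replace (l ++ x :: E2) with ((l ++ [x]) ++ E2) by (rewrite <- app_assoc; reflexivity).
    apply IH. intros y Hy; apply Hi; simpl; auto.
    apply Hs; auto. apply Hi; simpl; auto.
Qed.

Lemma fold_inv {A B} (f : B -> A -> B) (E : list A) (I : list A -> B -> Prop) :
  (forall l z r, In z E -> I l r -> I (l ++ [z]) (f r z)) ->
  forall r, I [] r -> I E (fold_left f E r).
Proof. intros Hs r H0. apply (fold_inv_aux f E I Hs E [] r); auto. apply incl_refl. Qed.

Definition CMin (k : nat) (e1 e2 : expr) : cmd :=
  CIfLe e1 e2 (CSet k e1) (CSet k e2).

Lemma exec_min a cur rho k e1 e2 :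
  exec a cur rho (CMin k e1 e2) = upd rho k (Rmin (eval_expr a cur rho e1) (eval_expr a cur rho e2)).
Proof. unfold CMin, Rmin; simpl. destruct Rle_dec; reflexivity. Qed.

Definition X1 := EReg 0. Definition Y1 := EReg 1.
Definition X3 := EReg 4. Definition Y3 := EReg 5.
Definition d12 := EDelta X1 Y1 EIn1 EIn2.
Definition d13 := EDelta X1 Y1 X3 Y3.
Definition d23 := EDelta EIn1 EIn2 X3 Y3.
Definition d21 := EDelta EIn1 EIn2 X1 Y1.
Definition d31 := EDelta X3 Y3 X1 Y1.
Definition d32 := EDelta X3 Y3 EIn1 EIn2.

Definition cobj (v : variant) : cmd :=
  match v with
  | MaxMin => CSeq (CMin 21 d12 d13) (CMin 20 (EReg 21) d23)
  | MaxSum => CSet 20 (EAdd (EAdd d12 d13) d23)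
  | MaxSumMin => CSeq (CMin 21 d12 d13) (CSeq (CMin 22 d21 d23) (CSeq (CMin 23 d31 d32)
                   (CSet 20 (EAdd (EAdd (EReg 21) (EReg 22)) (EReg 23)))))
  | MaxMinSum => CSeq (CMin 21 (EAdd d12 d13) (EAdd d21 d23)) (CMin 20 (EReg 21) (EAdd d31 d32))
  | MaxSumNeighbor => CSet 20 (EAdd d12 d23)
  end.

Lemma cobj_val v a cx cy rho :
  exec a (cx, cy) rho (cobj v) 20%nat = obj v a (rho 0%nat, rho 1%nat) (cx, cy) (rho 4%nat, rho 5%nat).
Proof.
  destruct v; cbn [cobj exec]; rewrite ?exec_min; unfold upd; simpl; reflexivity.
Qed.

Lemma cobj_keep v a cur rho j : (j < 20)%nat -> exec a cur rho (cobj v) j = rho j.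
Proof.
  intros Hj.
  assert (N : forall k, (20 <= k)%nat -> Nat.eqb j k = false) by (intros; apply Nat.eqb_neq; lia).
  destruct v; cbn [cobj exec]; rewrite ?exec_min; unfold upd; rewrite ?N by lia; reflexivity.
Qed.

Definition pA := CSeq (CSet 0 EIn1) (CSeq (CSet 1 EIn2) (CSeq (CSet 4 EIn1) (CSet 5 EIn2))).
Definition pB := CSeq (CIfLe (EReg 0) EIn1 CSkip (CSeq (CSet 0 EIn1) (CSet 1 EIn2)))
                      (CIfLe EIn1 (EReg 4) CSkip (CSeq (CSet 4 EIn1) (CSet 5 EIn2))).
Definition pC v := CSeq (cobj v) (CIfLe EIn1 (EReg 0) CSkip (CIfLe (EReg 4) EIn1 CSkip
   (CIfLe (EReg 20) (EReg 7) CSkip (CSeq (CSet 2 EIn1) (CSeq (CSet 3 EIn2) (CSet 7 (EReg 20))))))).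

Lemma passA a E rho : rho 7%nat = -1 -> E <> [] ->
  let r := run_pass a E rho pA in r 7%nat = -1 /\ In (r 0%nat, r 1%nat) E /\ In (r 4%nat, r 5%nat) E.
Proof.
  intros H7 HE. unfold run_pass.
  pose (J := fun (l : list pt) (r : regs) => r 7%nat = -1 /\ (l = [] \/ (In (r 0%nat, r 1%nat) E /\ In (r 4%nat, r 5%nat) E))).
  assert (I : J E (fold_left (fun r z => exec a z r pA) E rho)).
  { apply (fold_inv _ E J); unfold J; [|split; auto].
    intros l [zx zy] r Hz [Hr7 _]. unfold pA; simpl; unfold upd; simpl. split; auto. }
  destruct I as [I1 [I2|I2]]; [congruence|]. simpl; auto.
Qed.

Lemma passB a E rho : rho 7%nat = -1 -> In (rho 0%nat, rho 1%nat) E -> In (rho 4%nat, rho 5%nat) E ->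
  let r := run_pass a E rho pB in r 7%nat = -1 /\ In (r 0%nat, r 1%nat) E /\ In (r 4%nat, r 5%nat) E /\
    forall z, In z E -> r 0%nat <= fst z <= r 4%nat.
Proof.
  intros H7 H0 H4. unfold run_pass.
  pose (J := fun (l : list pt) (r : regs) => r 7%nat = -1 /\ In (r 0%nat, r 1%nat) E /\ In (r 4%nat, r 5%nat) E /\
    forall z, In z l -> r 0%nat <= fst z <= r 4%nat).
  assert (I : J E (fold_left (fun r z => exec a z r pB) E rho)).
  { apply (fold_inv _ E J); unfold J; [|split; [auto|split;[auto|split;[auto|intros w0 []]]]].
    intros l [zx zy] r Hz (Hr7 & Hr0 & Hr4 & Hl). unfold pB; simpl; unfold upd; simpl.
    repeat destruct Rle_dec; simpl in *; (split; [auto|split; [auto|split; [auto|]]]);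
     intros w Hw; apply in_app_or in Hw; destruct Hw as [Hw|[<-|[]]];
     try (specialize (Hl w Hw)); simpl; lra. }
  exact I.
Qed.

Lemma passC v a E rho lx ly rx ry :
  rho 0%nat = lx -> rho 1%nat = ly -> rho 4%nat = rx -> rho 5%nat = ry -> rho 7%nat = -1 ->
  let r := run_pass a E rho (pC v) in
  r 0%nat = lx /\ r 1%nat = ly /\ r 4%nat = rx /\ r 5%nat = ry /\
  ((forall z, In z E -> ~ mid (lx,ly) (rx,ry) z) \/
   (In (r 2%nat, r 3%nat) E /\ mid (lx,ly) (rx,ry) (r 2%nat, r 3%nat) /\
    forall z, In z E -> mid (lx,ly) (rx,ry) z ->
      obj v a (lx,ly) z (rx,ry) <= obj v a (lx,ly) (r 2%nat, r 3%nat) (rx,ry))).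
Proof.
  intros H0 H1 H4 H5 H7. unfold run_pass.
  pose (g := fun z => obj v a (lx,ly) z (rx,ry)).
  pose (J := fun (l : list pt) (r : regs) =>
    r 0%nat = lx /\ r 1%nat = ly /\ r 4%nat = rx /\ r 5%nat = ry /\
    ((r 7%nat = -1 /\ forall z, In z l -> ~ mid (lx,ly) (rx,ry) z) \/
     (In (r 2%nat, r 3%nat) E /\ mid (lx,ly) (rx,ry) (r 2%nat, r 3%nat) /\
      r 7%nat = g (r 2%nat, r 3%nat) /\
      forall z, In z l -> mid (lx,ly) (rx,ry) z -> g z <= r 7%nat))).
  assert (I : J E (fold_left (fun r z => exec a z r (pC v)) E rho)).
  { apply (fold_inv _ E J); unfold J;
      [|split; [auto|split;[auto|split;[auto|split;[auto|left; split; [auto| intros w0 []]]]]]].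
    intros l [zx zy] r Hz (R0 & R1 & R4 & R5 & HC).
    unfold pC. cbn [exec].
    remember (exec a (zx, zy) r (cobj v)) as r' eqn:Hr'.
    assert (K : forall j, (j < 20)%nat -> r' j = r j) by (intros; subst r'; apply cobj_keep; auto).
    assert (G : r' 20%nat = g (zx, zy)) by (subst r'; rewrite cobj_val, R0, R1, R4, R5; reflexivity).
    assert (gnn : 0 <= g (zx, zy)) by apply obj_nonneg.
    rewrite <- (K 0%nat) in R0 by lia. rewrite <- (K 1%nat) in R1 by lia.
    rewrite <- (K 4%nat) in R4 by lia. rewrite <- (K 5%nat) in R5 by lia.
    assert (K2 := K 2%nat ltac:(lia)). assert (K3 := K 3%nat ltac:(lia)).
    assert (K7 := K 7%nat ltac:(lia)).
    rewrite <- K2, <- K3, <- K7 in HC.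
    clear Hr' K.
    simpl. unfold upd; simpl.
    repeat destruct Rle_dec; simpl in *; rewrite ?R0, ?R1, ?R4, ?R5;
      (split; [auto|split;[auto|split;[auto|split;[auto|]]]]).
    - destruct HC as [[C7 C]|(C1 & C2 & C3 & C)];
        [left; split; [auto|] | right; split;[auto|split;[auto|split;[auto|]]]];
        intros w Hw Hm; apply in_app_or in Hw; destruct Hw as [Hw|[<-|[]]];
        try exact (C w Hw Hm); unfold mid in Hm; simpl in Hm; lra.
    - destruct HC as [[C7 C]|(C1 & C2 & C3 & C)];
        [left; split; [auto|] | right; split;[auto|split;[auto|split;[auto|]]]];
        intros w Hw Hm; apply in_app_or in Hw; destruct Hw as [Hw|[<-|[]]];
        try exact (C w Hw Hm); unfold mid in Hm; simpl in Hm; lra.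
    - destruct HC as [[C7 C]|(C1 & C2 & C3 & C)]; [lra|].
      right; split;[auto|split;[auto|split;[auto|]]].
      intros w Hw Hm; apply in_app_or in Hw; destruct Hw as [Hw|[<-|[]]].
      + exact (C w Hw Hm).
      + lra.
    - right. split; [auto|split; [unfold mid; simpl; lra|split; [rewrite G; reflexivity|]]].
      intros w Hw Hm; apply in_app_or in Hw; destruct Hw as [Hw|[<-|[]]]; [|lra].
      destruct HC as [[C7 C]|(C1 & C2 & C3 & C)]; [exfalso; apply (C w Hw Hm)|].
      specialize (C w Hw Hm). lra. }
  destruct I as (A0 & A1 & A4 & A5 & [[_ C]|(C1 & C2 & C3 & C)]); cbv zeta;
    (split;[auto|split;[auto|split;[auto|split;[auto|]]]]).
  - left; intros z Hz; exact (C z Hz).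
  - right. split; [auto|split;[auto|]]. intros z Hz Hm.
    specialize (C z Hz Hm). unfold g in C3, C. lra.
Qed.

Lemma third_point (E : list pt) p q : NoDup E -> (3 <= length E)%nat ->
  exists z, In z E /\ z <> p /\ z <> q.
Proof.
  intros Hnd Hl. apply NNPP; intro Hn.
  assert (Hi : incl E [p; q]).
  { intros z Hz. destruct (classic (z = p)) as [->|Hp]; [left; auto|].
    destruct (classic (z = q)) as [->|Hq]; [right; left; auto|].
    exfalso; apply Hn; exists z; auto. }
  pose proof (NoDup_incl_length Hnd Hi). simpl in *. lia.
Qed.

Theorem proposition6 (alpha : R) (Halpha : 0 < alpha) (v : variant) :
  exists P : program,
    forall E : list pt,
      (3 <= length E)%nat ->
      NoDup E ->
      (forall y z, In y E -> In z E -> y <> z -> incomp y z) ->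
      optimal v alpha E (run alpha P E).
Proof.
  exists (Program (CSet 7 (EConst (-1))) [pA; pB; pC v] CSkip).
  intros E Hlen Hnd Hinc. unfold run. cbn [p_init p_passes p_final fold_left].
  set (rho0 := exec alpha (0, 0) (fun _ => 0) (CSet 7 (EConst (-1)))).
  assert (H0 : rho0 7%nat = -1) by reflexivity.
  assert (HE : E <> []) by (intros ->; simpl in Hlen; lia).
  destruct (passA alpha E rho0 H0 HE) as (A7 & A0 & A4).
  set (rA := run_pass alpha E rho0 pA) in *.
  destruct (passB alpha E rA A7 A0 A4) as (B7 & B0 & B4 & Bb).
  set (rB := run_pass alpha E rA pB) in *.
  destruct (passC v alpha E rB (rB 0%nat) (rB 1%nat) (rB 4%nat) (rB 5%nat)
              eq_refl eq_refl eq_refl eq_refl B7) as (C0 & C1 & C4 & C5 & HC).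
  set (rC := run_pass alpha E rB (pC v)) in *.
  cbn [exec]. rewrite C0, C1, C4, C5.
  destruct HC as [HC|(M1 & M2 & M3)].
  - exfalso. destruct (third_point E (rB 0%nat, rB 1%nat) (rB 4%nat, rB 5%nat) Hnd Hlen)
      as (z & Hz & Hz1 & Hz2).
    apply (HC z Hz). unfold mid. simpl.
    pose proof (fst_neq E Hinc _ _ B0 Hz (not_eq_sym Hz1)).
    pose proof (fst_neq E Hinc _ _ Hz B4 Hz2).
    pose proof (Bb z Hz). simpl in *. lra.
  - apply final_opt; auto.
Qed.
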